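(* Let $\mathcal{X}=\{1,\ldots,n\}$, let $p=(p(1),\ldots,p(n))$ be a probability vector with $p(1)\geq\cdots\geq p(n)>0$ (the prior of $X$), and let $k<n$ be a positive integer. Let $j^*:=\min\{j:1\leq j\leq k,\ p(j)\leq \sum_{i=j}^n p(i)/(k-j+1)\}$ and $\pi=(\pi_1,\ldots,\pi_k)$ with $\pi_l=p(l)$ for $l\leq j^*-1$ and $\pi_l=\sum_{i=j^*}^n p(i)/(k-j^*+1)$ for $j^*\leq l\leq k$. Let $\mathcal{M}^*$ be the family of all $M\subseteq\mathcal{X}$ with $|M|=k$ and $\{1,\ldots,j^*-1\}\subseteq M$. Then the system $\sum_{M\in\mathcal{M}^*:\,i\in M}v_M=p(i)$ for $i=j^*,\ldots,n$, $v_M\geq0$ for $M\in\mathcal{M}^*$, has a solution, and for any solution $v$ the channel with outputs $\{y_M:M\in\mathcal{M}^*\}$ given by $p(y_M\mid i)=v_M/p(i)$ for $i\in\{j^*,\ldots,n\}\cap M$, $p(y_M\mid i)=v_M(k-j^*+1)/\sum_{j=j^*}^np(j)$ for $i\in\{1,\ldots,j^*-1\}$, and $p(y_M\mid i)=0$ otherwise, is a feasible channel satisfying $H(X\mid Y)=H(\pi)$ for every generalised entropy $(\eta,F)$.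
   Context: Generalised entropy: a pair $(\eta,F)$ where $F$ is a bounded real-valued function on probability vectors of every finite length that is symmetric (unchanged by permuting entries) and expansible (unchanged by appending zero entries), and $\eta$ is a real function, such that either $\eta$ is increasing and $F$ concave, or $\eta$ is decreasing and $F$ convex. $H(q)=\eta(F(q))$ and $H(X\mid Y)=\eta\big(\sum_{y:\,p(y)>0}p(y)F(p_{X\mid y})\big)$ with $p_{X\mid y}=(p(x\mid y))_{x\in\mathcal{X}}$. A channel is a discrete output set $\mathcal{Y}$ with conditional probabilities $p(y\mid x)\geq0$, $\sum_y p(y\mid x)=1$; $Y$ is its output when the input is $X\sim p$, with $p(y)=\sum_x p(x)p(y\mid x)$ and $p(x\mid y)=p(x)p(y\mid x)/p(y)$. The pre-image of $y$ is $\{x:p(y\mid x)>0\}$; the channel is feasible if every pre-image has at most $k$ elements. *)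

(* Defs.v *)
From HB Require Import structures.
From mathcomp Require Import all_boot all_order all_algebra.
From mathcomp Require Import reals.
Set Implicit Arguments. Unset Strict Implicit. Unset Printing Implicit Defensive.
Import Order.TTheory GRing.Theory Num.Theory.
Local Open Scope ring_scope.

Section GenEntropy.
Variable R : realType.

Definition probvec (s : seq R) : Prop :=
  (forall x, x \in s -> 0 <= x) /\ \sum_(x <- s) x = 1.

Definition mix (l : R) (s t : seq R) : seq R :=
  [seq l * a.1 + (1 - l) * a.2 | a <- zip s t].

Definition concave_pv (F : seq R -> R) : Prop :=
  forall s t (l : R), probvec s -> probvec t -> size s = size t ->
    0 <= l <= 1 -> l * F s + (1 - l) * F t <= F (mix l s t).

Definition convex_pv (F : seq R -> R) : Prop :=
  forall s t (l : R), probvec s -> probvec t -> size s = size t ->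
    0 <= l <= 1 -> F (mix l s t) <= l * F s + (1 - l) * F t.

Definition increasing_fun (eta : R -> R) : Prop :=
  forall x y, x <= y -> eta x <= eta y.
Definition decreasing_fun (eta : R -> R) : Prop :=
  forall x y, x <= y -> eta y <= eta x.

(** generalised entropy (eta, F); F only matters on probability vectors *)
Definition gen_entropy (eta : R -> R) (F : seq R -> R) : Prop :=
  [/\ exists B : R, forall s, probvec s -> `|F s| <= B,
      (forall s t, probvec s -> perm_eq s t -> F s = F t),
      (forall s m, probvec s -> F (s ++ nseq m 0) = F s) &
      (increasing_fun eta /\ concave_pv F) \/ (decreasing_fun eta /\ convex_pv F)].

Definition entropy (eta : R -> R) (F : seq R -> R) (q : seq R) : R := eta (F q).

(** channels with input ordinals and finite output set Y; W y x = p(y | x) *)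
Definition is_channel (n : nat) (Y : finType) (W : Y -> 'I_n -> R) : Prop :=
  (forall y x, 0 <= W y x) /\ (forall x, \sum_(y : Y) W y x = 1).

Definition preimage (n : nat) (Y : finType) (W : Y -> 'I_n -> R) (y : Y)
  : {set 'I_n} := [set x | 0 < W y x].

Definition feasible (k n : nat) (Y : finType) (W : Y -> 'I_n -> R) : Prop :=
  forall y, (#|preimage W y| <= k)%N.

Definition out_prob (n : nat) (Y : finType) (p : 'I_n -> R) (W : Y -> 'I_n -> R)
  (y : Y) : R := \sum_(x : 'I_n) p x * W y x.

Definition posterior (n : nat) (Y : finType) (p : 'I_n -> R) (W : Y -> 'I_n -> R)
  (y : Y) : seq R := [seq p x * W y x / out_prob p W y | x <- enum 'I_n].

Definition cond_entropy (eta : R -> R) (F : seq R -> R) (n : nat) (Y : finType)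
  (p : 'I_n -> R) (W : Y -> 'I_n -> R) : R :=
  eta (\sum_(y : Y | 0 < out_prob p W y) out_prob p W y * F (posterior p W y)).

(** ---- Objects of the lemma.  Indices are 0-based: paper element i is the
   ordinal i-1. ---- *)

Definition tailsum (n : nat) (p : 'I_n -> R) (j : nat) : R :=
  \sum_(i < n | (j <= i)%N) p i.

(** the defining condition of jstar, in 0-based form: paper j = j0 + 1,
    p(j) <= sum_{i=j}^n p(i) / (k - j + 1) *)
Definition jcond (n k : nat) (p : 'I_n -> R) (j : 'I_n) : bool :=
  (j < k)%N && (p j <= tailsum p j / (k - j)%:R).

(** jstar - 1 (0-based jstar): the least 0-based index j < k satisfying jcond
    (enum of ordinals lists 0,...,n-1 in order, so the position found is the value) *)
Definition jstar0 (n k : nat) (p : 'I_n -> R) : nat :=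
  find (jcond k p) (enum 'I_n).

Definition pivec (n k : nat) (p : 'I_n -> R) : seq R :=
  let js := jstar0 k p in
  map (fun i : 'I_n => if (i < js)%N then p i else tailsum p js / (k - js)%:R)
      (filter (fun i : 'I_n => (i < k)%N) (enum 'I_n)).

Definition Mstar (n k : nat) (p : 'I_n -> R) : {set {set 'I_n}} :=
  [set M : {set 'I_n} | (#|M| == k) && ([set i : 'I_n | (i < jstar0 k p)%N] \subset M)].

Definition lemma2_solution (n k : nat) (p : 'I_n -> R) (v : {set 'I_n} -> R) : Prop :=
  (forall i : 'I_n, (jstar0 k p <= i)%N ->
     \sum_(M in Mstar k p | i \in M) v M = p i) /\
  (forall M, M \in Mstar k p -> 0 <= v M).

Definition Mout (n k : nat) (p : 'I_n -> R) : finType := {M : {set 'I_n} | M \in Mstar k p}.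

Definition lemma2_channel (n k : nat) (p : 'I_n -> R) (v : {set 'I_n} -> R)
  (y : Mout k p) (i : 'I_n) : R :=
  let js := jstar0 k p in
  let M := val y in
  if (js <= i)%N then (if i \in M then v M / p i else 0)
  else v M * (k - js)%:R / tailsum p js.

End GenEntropy.
Arguments lemma2_channel {R n} k p v y i.

(* Main.v *)
Require Import Defs.
From HB Require Import structures.
From mathcomp Require Import all_boot all_order all_algebra.
From mathcomp Require Import reals.
From mathcomp Require Import ring lra zify.
Import Order.TTheory GRing.Theory Num.Theory.
Local Open Scope ring_scope.

Lemma size_filter_enum (T:finType) (P : pred T) : size (filter P (enum T)) = #|[set x | P x]|.
Proof.
rewrite size_filter cardE /enum_mem size_filter count_filter; apply: eq_count => x; by rewrite !inE /= andbT.
Qed.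

Lemma card_ltn (n j : nat) : (j <= n)%N -> #|[set i : 'I_n | (i < j)%N]| = j.
Proof.
move=> jn; rewrite -size_filter_enum.
have := filter_map val (fun i => (i < j)%N) (enum 'I_n).
rewrite val_enum_ord (filter_iota_ltn 0 jn) => /(congr1 size).
rewrite size_map size_iota => h; exact: (esym h).
Qed.

Section Dec.
Variable R : realFieldType.
Variable T : finType.

Definition isdec (m : nat) (x : T -> R) (D : {set T} -> R) :=
  [/\ forall S, 0 <= D S, \sum_S D S = 1,
      forall i, \sum_S D S * (i \in S)%:R = x i
    & forall S, D S != 0 -> #|S| = m].

Definition fracs (x : T -> R) := [set i | (0 < x i) && (x i < 1)].

Lemma dec_mix m x y z q Dy Dz : 0 <= q <= 1 ->
  (forall i, x i = q * y i + (1 - q) * z i) ->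
  isdec m y Dy -> isdec m z Dz -> isdec m x (fun S => q * Dy S + (1 - q) * Dz S).
Proof.
move=> /andP[q0 q1] hx [y1 y2 y3 y4] [z1 z2 z3 z4]; split.
- by move=> S; rewrite addr_ge0 // mulr_ge0 // subr_ge0.
- by rewrite big_split /= -!mulr_sumr y2 z2; ring.
- move=> i; rewrite hx -y3 -z3 !mulr_sumr -big_split /=.
  by apply: eq_bigr => S _; ring.
- move=> S hS; case: (Dy S =P 0) => [h0|/eqP]; last exact: y4.
  apply: z4; apply/eqP => h1; move: hS; by rewrite h0 h1 !mulr0 addr0 eqxx.
Qed.

Lemma dec_small m x : (forall i, 0 <= x i <= 1) -> \sum_i x i = m%:R ->
  (#|fracs x| <= 1)%N -> exists D, isdec m x D.
Proof.
move=> hb hs hf.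
have int01 i : i \notin fracs x -> x i = (x i == 1)%:R.
  rewrite inE negb_and -!leNgt; have /andP[h0 h1] := hb i.
  case/orP => h.
    have -> : x i = 0 by apply/le_anti; rewrite h h0.
    by rewrite eq_sym oner_eq0.
  have -> : x i = 1 by apply/le_anti; rewrite h h1.
  by rewrite eqxx.
case: (set_0Vmem (fracs x)) => [f0|[a ha]].
  pose S0 := [set i | x i == 1].
  exists (fun S => (S == S0)%:R); split.
  - by move=> S; rewrite ler0n.
  - by rewrite (bigD1 S0) //= eqxx big1 ?addr0 // => S /negbTE ->.
  - move=> i; rewrite (bigD1 S0) //= eqxx mul1r big1 ?addr0.
      by rewrite inE -int01 // f0 inE.
    by move=> S /negbTE ->; rewrite mul0r.
  - move=> S; rewrite pnatr_eq0 eqb0 negbK => /eqP ->.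
    apply/eqP; rewrite -(eqr_nat R) -hs -sum1_card natr_sum.
    rewrite [in X in _ == X](eq_bigr (fun i => ((x i == 1)%:R))); last first.
      by move=> i _; rewrite -int01 // f0 inE.
    rewrite [X in X == _](big_mkcond) /=.
    by apply/eqP/eq_bigr => i _; rewrite inE; case: (x i == 1).
exfalso.
have fa : fracs x = [set a].
  apply/eqP; rewrite eq_sym eqEcard sub1set ha cards1 hf.
  by [].
move: hs; rewrite (bigD1 a) //=.
rewrite (eq_bigr (fun i => ((x i == 1)%:R))); last first.
  by move=> i hi; rewrite -int01 // fa inE.
rewrite -natr_sum.
set c := (\sum_(i | _) _)%N => hs.
have : a \in fracs x by [].
rewrite inE => /andP[xa0 xa1].
case: (leqP c m) => hcm.
  have e : x a = (m - c)%:R by rewrite natrB // -hs addrK.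
  move: xa0 xa1; rewrite e ltr0n -(mulr1n (1 : R)) ltr_nat; lia.
have : (m%:R : R) < c%:R by rewrite ltr_nat.
lra.
Qed.

Definition upd (x : T -> R) a b u w := fun i => if i == a then u else if i == b then w else x i.

Lemma upd_sum x a b u w : a != b ->
  \sum_i upd x a b u w i = \sum_i x i - x a - x b + u + w.
Proof.
move=> ab.
have ba : b != a by rewrite eq_sym.
have E (f : T -> R) : \sum_i f i = f a + f b + \sum_(i | (i != a) && (i != b)) f i.
  by rewrite (bigD1 a) //= (bigD1 b) //= addrA.
rewrite !E /upd eqxx (negbTE ba) eqxx.
rewrite (eq_bigr x); first by ring.
by move=> i /andP[/negbTE -> /negbTE ->].
Qed.

Lemma upd_fracs x a b u w (c : T) : a != b -> a \in fracs x -> b \in fracs x ->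
  (c == a) || (c == b) -> (upd x a b u w c == 0) || (upd x a b u w c == 1) ->
  fracs (upd x a b u w) \subset fracs x :\ c.
Proof.
move=> ab ha hb hc h01; apply/subsetP => i.
rewrite [in X in X -> _]inE => hi.
rewrite !inE; apply/andP; split.
  apply/eqP => eic; subst i.
  by case/orP: h01 hi => /eqP ->; rewrite ?ltxx ?andbF ?lt01 // ltxx.
move: hi; rewrite /upd; case: ifP => [/eqP ->|_]; first by move: ha; rewrite inE.
case: ifP => [/eqP ->|_]; first by move: hb; rewrite inE.
by [].
Qed.

Lemma dec_exists m x : (forall i, 0 <= x i <= 1) -> \sum_i x i = m%:R ->
  exists D, isdec m x D.
Proof.
move=> hb hs.
suff: forall N x, (forall i, 0 <= x i <= 1) -> \sum_i x i = m%:R ->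
  (#|fracs x| <= N)%N -> exists D, isdec m x D by move=> /(_ _ x hb hs (leqnn _)).
elim=> [|N IH] {}x {}hb {}hs hN.
  by apply: dec_small => //; apply: leq_trans hN _.
case: (leqP #|fracs x| 1) => h1; first exact: dec_small.
have [a ha] : exists a, a \in fracs x.
  by apply/set0Pn; rewrite -cards_eq0 -lt0n; apply: ltn_trans h1.
have [b hb'] : exists b, b \in fracs x :\ a.
  apply/set0Pn; rewrite -cards_eq0 -lt0n.
  move: h1; rewrite (cardsD1 a) ha; lia.
move: hb'; rewrite !inE => /andP[ba hb'].
have hbf : b \in fracs x by rewrite inE.
have ab : a != b by rewrite eq_sym.
move: (ha) (hbf); rewrite !inE => /andP[a0 a1] /andP[b0 b1].
have cardD c : c \in fracs x -> forall u w, (c == a) || (c == b) ->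
   (upd x a b u w c == 0) || (upd x a b u w c == 1) ->
   (#|fracs (upd x a b u w)| <= N)%N.
  move=> hc u w hcab h01.
  have := subset_leq_card (upd_fracs x a b u w c ab ha hbf hcab h01).
  move: hN; rewrite (cardsD1 c (fracs x)) hc; lia.
have bnd u w : 0 <= u <= 1 -> 0 <= w <= 1 -> forall i, 0 <= upd x a b u w i <= 1.
  by move=> hu hw i; rewrite /upd; case: ifP => _ //; case: ifP => _.
set s := x a + x b.
case: (lerP s 1) => hs1.
  have [Dy dy] : exists D, isdec m (upd x a b s 0) D.
    apply: IH; first by apply: bnd; apply/andP; split => //; rewrite /s in hs1 *; lra.
      by rewrite upd_sum // hs /s; ring.
    apply: (cardD b) => //; rewrite ?eqxx ?orbT //.
    by rewrite /upd (negbTE ba) !eqxx.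
  have [Dz dz] : exists D, isdec m (upd x a b 0 s) D.
    apply: IH; first by apply: bnd; apply/andP; split => //; rewrite /s in hs1 *; lra.
      by rewrite upd_sum // hs /s; ring.
    apply: (cardD a) => //; rewrite ?eqxx ?orbT //.
    by rewrite /upd eqxx eqxx.
  have s0 : 0 < s by rewrite /s in hs1 *; lra.
  eexists; apply: (@dec_mix m x _ _ (x a / s) _ _ _ _ dy dz).
    apply/andP; split; first by rewrite divr_ge0 // ltW.
    by rewrite ler_pdivrMr // mul1r /s; lra.
  move=> i; rewrite /upd; case: ifP => [/eqP ->|_].
    by rewrite mulr0 addr0 mulfVK // gt_eqF.
  case: ifP => [/eqP ->|_]; last by ring.
  rewrite mulr0 add0r mulrBl mul1r mulfVK ?gt_eqF // /s; ring.
have [Dy dy] : exists D, isdec m (upd x a b 1 (s - 1)) D.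
  apply: IH; first by apply: bnd; apply/andP; split => //; rewrite /s in hs1 *; lra.
    by rewrite upd_sum // hs /s; ring.
  apply: (cardD a) => //; rewrite ?eqxx ?orbT //.
  by rewrite /upd eqxx eqxx orbT.
have [Dz dz] : exists D, isdec m (upd x a b (s - 1) 1) D.
  apply: IH; first by apply: bnd; apply/andP; split => //; rewrite /s in hs1 *; lra.
    by rewrite upd_sum // hs /s; ring.
  apply: (cardD b) => //; rewrite ?eqxx ?orbT //.
  by rewrite /upd (negbTE ba) !eqxx orbT.
have s0 : 0 < 2 - s by rewrite /s in hs1 *; lra.
eexists; apply: (@dec_mix m x _ _ ((1 - x b) / (2 - s)) _ _ _ _ dy dz).
  apply/andP; split; first by apply: divr_ge0; rewrite /s in s0 *; lra.
  by rewrite ler_pdivrMr // mul1r /s; lra.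
have sn : 2 - s != 0 by rewrite lt0r_neq0.
move: sn; rewrite /s => sn.
move=> i; rewrite /upd; case: ifP => [/eqP ->|_].
  by field.
case: ifP => [/eqP ->|_]; last by ring.
by field.
Qed.

End Dec.

Section Main.
Variable R : realType.
Variables (n k : nat) (p : 'I_n -> R).
Hypothesis p_pos : forall i, 0 < p i.
Hypothesis p_sum : \sum_(i < n) p i = 1.
Hypothesis p_noninc : forall i j : 'I_n, (i <= j)%N -> p j <= p i.
Hypothesis k_pos : (0 < k)%N.
Hypothesis k_lt_n : (k < n)%N.

Local Notation js := (jstar0 k p).
Local Notation T := (tailsum p js).
Local Notation m := (k - js)%N.

Lemma tail_ge (j : 'I_n) : p j <= tailsum p j.
Proof.
rewrite /tailsum (bigD1 j) ?leqnn //= lerDl; apply: sumr_ge0 => i _; exact: ltW.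
Qed.

Lemma js_prop : exists2 j0 : 'I_n, val j0 = js & jcond k p j0.
Proof.
have kn : (k.-1 < n)%N by lia.
set w := Ordinal kn.
have hw : jcond k p w.
  rewrite /jcond /=; apply/andP; split; first by lia.
  have -> : (k - k.-1 = 1)%N by lia.
  by rewrite divr1 tail_ge.
have hh : has (jcond k p) (enum 'I_n) by apply/hasP; exists w; rewrite ?mem_enum.
have hlt := hh; rewrite has_find size_enum_ord in hlt.
exists (Ordinal hlt) => //.
have := nth_find w hh.
by rewrite -(nth_ord_enum w (Ordinal hlt)).
Qed.

Lemma js_lt_k : (js < k)%N.
Proof. by case: js_prop => j0 <- /andP[]. Qed.

Lemma js_lt_n : (js < n)%N.
Proof. have := js_lt_k; lia. Qed.

Definition j0 : 'I_n := Ordinal js_lt_n.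

Lemma m_pos : (0 < m%:R :> R).
Proof. rewrite ltr0n; have := js_lt_k; lia. Qed.

Lemma pj0_le : p j0 <= T / m%:R.
Proof.
case: js_prop => j1 e /andP[_].
by have -> : j1 = j0 by apply: val_inj.
Qed.

Lemma T_pos : 0 < T.
Proof. apply: lt_le_trans (p_pos j0) _; exact: (tail_ge j0). Qed.

Lemma p_le_tail (i : 'I_n) : (js <= i)%N -> p i <= T / m%:R.
Proof. move=> h; apply: le_trans pj0_le; exact: p_noninc. Qed.

Definition Hset : {set 'I_n} := [set i : 'I_n | (i < js)%N].

Lemma card_H : #|Hset| = js.
Proof. apply: card_ltn; exact: ltnW js_lt_n. Qed.

Lemma head_sum : \sum_(i : 'I_n | (i < js)%N) p i = 1 - T.
Proof.
have := p_sum; rewrite (bigID (fun i : 'I_n => (js <= i)%N)) /= -/(tailsum p js).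
rewrite (eq_bigl (fun i : 'I_n => (i < js)%N)); first by move=> h; rewrite -h; ring.
by move=> i; rewrite -ltnNge.
Qed.


Lemma Mstar_card M : M \in Mstar k p -> #|M :\: Hset| = m.
Proof.
rewrite inE => /andP[/eqP hM hH].
have := cardsID Hset M.
rewrite (setIidPr hH) card_H hM; lia.
Qed.

Lemma Mstar_H M : M \in Mstar k p -> Hset \subset M.
Proof. by rewrite inE => /andP[]. Qed.

Lemma Mstar_sz M : M \in Mstar k p -> #|M| = k.
Proof. by rewrite inE => /andP[/eqP]. Qed.

Lemma sum_H (c : R) : \sum_(i : 'I_n | (i < js)%N) c = c * js%:R.
Proof.
rewrite (eq_bigl (fun i => i \in Hset)); last by move=> i; rewrite inE.
by rewrite sumr_const card_H mulr_natr.
Qed.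

Lemma exists_sol : exists v, lemma2_solution k p v.
Proof.
have Tp := T_pos; have mp := m_pos.
pose x := fun i : 'I_n => if (i < js)%N then 1 else p i * m%:R / T.
have hb : forall i, 0 <= x i <= 1.
  move=> i; rewrite /x; case: ifP => h; first by rewrite ler01 lexx.
  apply/andP; split; first by rewrite divr_ge0 ?mulr_ge0 // ltW.
  rewrite ler_pdivrMr // mul1r -ler_pdivlMr //; apply: p_le_tail; lia.
have hs : \sum_i x i = k%:R.
  rewrite (bigID (fun i : 'I_n => (i < js)%N)) /=.
  rewrite (eq_bigr (fun _ => 1)); last by move=> i h; rewrite /x h.
  rewrite sum_H mul1r.
  rewrite (eq_bigr (fun i => p i * (m%:R / T))); last first.
    by move=> i h; rewrite /x (negbTE h) mulrA.
  rewrite -mulr_suml.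
  have -> : \sum_(i : 'I_n | ~~ (i < js)%N) p i = T.
    by rewrite /tailsum; apply: eq_bigl => i; rewrite ltnNge negbK.
  rewrite mulrCA divff ?gt_eqF // mulr1 -natrD; congr _%:R.
  have := js_lt_k; lia.
have [D [d1 d2 d3 d4]] := @dec_exists _ _ k x hb hs.
have supp : forall M, D M != 0 -> M \in Mstar k p.
  move=> M hM; rewrite inE d4 // eqxx /=; apply/subsetP => j; rewrite inE => hj.
  have e : \sum_S D S * (1 - (j \in S)%:R) = 0.
    rewrite (eq_bigr (fun S => D S - D S * (j \in S)%:R)); last first.
      by move=> S _; rewrite mulrBr mulr1.
    by rewrite sumrB d2 d3 /x hj subrr.
  have nn : forall S, true -> 0 <= D S * (1 - (j \in S)%:R).
    by move=> S _; apply: mulr_ge0 => //; case: (j \in S); rewrite ?subrr ?subr0.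
  have := @psumr_eq0P _ _ _ _ nn e M isT.
  case: (j \in M) => //; rewrite subr0 mulr1 => h0; move: hM; rewrite h0 eqxx.
  done.
exists (fun M => T / m%:R * D M); split; last first.
  by move=> M _; rewrite mulr_ge0 // divr_ge0 // ltW.
move=> i hi.
transitivity (\sum_M T / m%:R * (D M * (i \in M)%:R)).
  rewrite [RHS](bigID (fun M => M \in Mstar k p)) /= [X in _ = _ + X]big1 ?addr0.
    rewrite big_mkcondr /=; apply: eq_bigr => M _.
    by case: (i \in M); rewrite ?mulr1 ?mulr0.
  move=> M /negbTE hM.
  case: (D M =P 0) => [->|/eqP/supp]; first by rewrite !mul0r mulr0.
  by rewrite hM.
rewrite -mulr_sumr d3 /x ifN; last by rewrite -leqNgt.
field; rewrite ?gt_eqF //.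
Qed.


Lemma cnt M : M \in Mstar k p ->
  \sum_(i : 'I_n | (js <= i)%N) ((i \in M)%:R : R) = m%:R.
Proof.
move=> hM; rewrite -(Mstar_card M hM).
transitivity (\sum_(i in M :\: Hset) (1 : R)); last by rewrite sumr_const.
rewrite big_mkcond [RHS]big_mkcond; apply: eq_bigr => i _; rewrite !inE -leqNgt.
by case: (i \in M); case: (js <= i)%N.
Qed.

Definition gpost (M : {set 'I_n}) (i : 'I_n) : R :=
  if (js <= i)%N then (if i \in M then T / m%:R else 0) else p i.

Definition gpi (i : 'I_n) : R := if (i < js)%N then p i else T / m%:R.

Lemma pivecE : pivec k p = map gpi (filter (fun i : 'I_n => (i < k)%N) (enum 'I_n)).
Proof. by []. Qed.

Lemma perm_post M : M \in Mstar k p ->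
  perm_eq (map (gpost M) (enum 'I_n)) (pivec k p ++ nseq (n - k) 0).
Proof.
move=> hM.
set e := enum 'I_n.
pose P1 := fun i : 'I_n => (i < js)%N.
pose f1 := filter P1 e. pose f23 := filter (predC P1) e.
pose f2 := filter (mem M) f23. pose f3 := filter (predC (mem M)) f23.
have s1 : perm_eq e (f1 ++ f2 ++ f3).
  rewrite perm_sym; apply: (@perm_trans _ (f1 ++ f23)).
    by rewrite perm_cat2l /f2 /f3 perm_filterC.
  by rewrite /f1 /f23 perm_filterC.
have sz1 : size f1 = js.
  rewrite /f1 size_filter_enum -card_H; apply: eq_card => i; by rewrite !inE.
have sz2 : size f2 = m.
  rewrite /f2 /f23 -filter_predI size_filter_enum -(Mstar_card M hM).
  by apply: eq_card => i; rewrite !inE /= andbC.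
have sz3 : size f3 = (n - k)%N.
  have := perm_size s1; rewrite /e size_enum_ord !size_cat sz1 sz2.
  have := js_lt_k; move: (size f3) (jstar0 k p) => s3 j h1 h2; lia.
have m1 : perm_eq (map (gpost M) e) (map p f1 ++ nseq m (T / m%:R) ++ nseq (n - k) 0).
  apply: perm_trans (perm_map (gpost M) s1) _; rewrite !map_cat.
  have -> : map (gpost M) f1 = map p f1.
    apply/eq_in_map => i; rewrite mem_filter /P1 /gpost => /andP[h _].
    by move: h; rewrite ltnNge => /negbTE ->.
  have -> : map (gpost M) f2 = nseq m (T / m%:R).
    have h0 : all (pred1 (T / m%:R)) (map (gpost M) f2).
      apply/allP => z /mapP[i].
      rewrite !mem_filter /P1 /= => /andP[iM /andP[h _]] ->.
      by move: h; rewrite -leqNgt /gpost => ->; rewrite iM.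
    by rewrite (all_pred1P _ _ h0) size_map sz2.
  have -> : map (gpost M) f3 = nseq (n - k) 0.
    have h0 : all (pred1 0) (map (gpost M) f3).
      apply/allP => z /mapP[i].
      rewrite !mem_filter /P1 /= => /andP[iM /andP[h _]] ->.
      by move: h; rewrite -leqNgt /gpost => ->; rewrite (negbTE iM).
    by rewrite (all_pred1P _ _ h0) size_map sz3.
  by [].
apply: perm_trans m1 _.
rewrite catA perm_cat2r pivecE.
pose fk := filter (fun i : 'I_n => (i < k)%N) e.
have s2 : perm_eq fk (filter P1 fk ++ filter (predC P1) fk) by rewrite perm_sym perm_filterC.
rewrite perm_sym; apply: perm_trans (perm_map gpi s2) _; rewrite map_cat.
have e1 : filter P1 fk = f1.
  rewrite /fk -filter_predI; apply: eq_filter => i /=; rewrite /P1.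
  case h : (i < js)%N => //=; exact: ltn_trans h js_lt_k.
have szk : size fk = k by rewrite /fk size_filter_enum card_ltn // ltnW.
have sz4 : size (filter (predC P1) fk) = m.
  have := perm_size s2; rewrite size_cat e1 sz1 szk; have := js_lt_k.
  move: (size _) (jstar0 k p) => s3 j h1 h2; lia.
rewrite e1.
have -> : map gpi f1 = map p f1.
  by apply/eq_in_map => i; rewrite mem_filter /P1 /gpi => /andP[h _]; rewrite h.
have -> : map gpi (filter (predC P1) fk) = nseq m (T / m%:R).
  have h0 : all (pred1 (T / m%:R)) (map gpi (filter (predC P1) fk)).
    apply/allP => z /mapP[i].
    rewrite !mem_filter /P1 /= => /andP[h _] ->.
    by rewrite /gpi (negbTE h).
  by rewrite (all_pred1P _ _ h0) size_map sz4.
by [].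
Qed.


Lemma sum_Mout (F : {set 'I_n} -> R) :
  \sum_(y : Mout k p) F (val y) = \sum_(M in Mstar k p) F M.
Proof. by rewrite [RHS]big_sub. Qed.


Lemma sum_lt (j : nat) (c : R) : (j <= n)%N -> \sum_(i : 'I_n | (i < j)%N) c = c * j%:R.
Proof.
move=> jn.
rewrite (eq_bigl (fun i => i \in [set i : 'I_n | (i < j)%N])); last by move=> i; rewrite inE.
by rewrite sumr_const card_ltn // mulr_natr.
Qed.

Lemma probvec_pivec : probvec (pivec k p).
Proof.
have Tp := T_pos; have mp := m_pos.
split.
  move=> x; rewrite pivecE => /mapP[i _ ->]; rewrite /gpi.
  by case: ifP => _; rewrite ltW // divr_gt0.
rewrite pivecE big_map big_filter big_enum_cond /=.
rewrite (bigID (fun i : 'I_n => (i < js)%N)) /=.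
have -> : \sum_(i : 'I_n | (i < k)%N && (i < js)%N) gpi i = 1 - T.
  rewrite -head_sum; apply: eq_big => i.
    case h : (i < js)%N; rewrite ?andbF ?andbT //.
    exact: ltn_trans h js_lt_k.
  by move=> /andP[_ h]; rewrite /gpi h.
rewrite (eq_bigr (fun _ => T / m%:R)); last first.
  by move=> i /andP[_ h]; rewrite /gpi (negbTE h).
have e := sum_lt k (T / m%:R) (ltnW k_lt_n).
rewrite (bigID (fun i : 'I_n => (i < js)%N)) /= in e.
have e2 : \sum_(i : 'I_n | (i < k)%N && (i < js)%N) (T / m%:R) = T / m%:R * js%:R.
  rewrite -sum_lt; last exact: ltnW js_lt_n.
  apply: eq_bigl => i; case h : (i < js)%N; rewrite ?andbF ?andbT //.
  exact: ltn_trans h js_lt_k.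
have e3 : (k%:R : R) = js%:R + m%:R by rewrite -natrD subnKC // ltnW // js_lt_k.
move: e; rewrite e2 e3 => e.
have -> : \sum_(i : 'I_n | (i < k)%N && ~~ (i < js)%N) (T / m%:R) = T / m%:R * m%:R.
  by apply: (addrI (T / m%:R * js%:R)); rewrite e mulrDr.
field; rewrite gt_eqF //.
Qed.

Section V.
Variable v : {set 'I_n} -> R.
Hypothesis hv : lemma2_solution k p v.

Local Notation W := (lemma2_channel k p v).

Lemma sumV : \sum_(M in Mstar k p) v M = T / m%:R.
Proof.
have mp := m_pos.
have e : T = \sum_(M in Mstar k p) v M * m%:R.
  rewrite /tailsum.
  transitivity (\sum_(i : 'I_n | (js <= i)%N) \sum_(M in Mstar k p) v M * (i \in M)%:R).
    apply: eq_bigr => i hi; rewrite -(hv.1 i hi) big_mkcondr /=.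
    by apply: eq_bigr => M _; case: (i \in M); rewrite ?mulr1 ?mulr0.
  rewrite exchange_big /=; apply: eq_bigr => M hM.
  by rewrite -mulr_sumr cnt.
rewrite e -mulr_suml mulfK // gt_eqF //.
Qed.

Lemma W_ge0 y i : 0 <= W y i.
Proof.
have Tp := T_pos; have mp := m_pos.
have v0 := hv.2 _ (valP y).
rewrite /lemma2_channel /=; case: ifP => _.
  by case: ifP => _ //; rewrite divr_ge0 // ltW.
by rewrite divr_ge0 ?mulr_ge0 // ltW.
Qed.

Lemma W_sum i : \sum_y W y i = 1.
Proof.
have Tp := T_pos; have mp := m_pos.
case hi : (js <= i)%N.
  transitivity (\sum_(M in Mstar k p) (if i \in M then v M / p i else 0)).
    by rewrite -sum_Mout; apply: eq_bigr => y _; rewrite /lemma2_channel /= hi.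
  rewrite -big_mkcondr /= -mulr_suml (hv.1 i hi) divff // gt_eqF //.
transitivity (\sum_(M in Mstar k p) v M * (m%:R / T)).
  by rewrite -sum_Mout; apply: eq_bigr => y _; rewrite /lemma2_channel /= hi mulrA.
rewrite -mulr_suml sumV; field; rewrite !gt_eqF //.
Qed.

Lemma W_feasible : feasible k W.
Proof.
move=> y; apply: (@leq_trans #|val y|); last by rewrite (Mstar_sz _ (valP y)).
apply: subset_leq_card.
apply/subsetP => i; rewrite inE /lemma2_channel /=.
case: ifP => hi; first by case: ifP => //; rewrite ltxx.
move=> _; have := Mstar_H _ (valP y); move/subsetP; apply; rewrite inE ltnNge hi.
done.
Qed.

Lemma outE y : out_prob p W y = v (val y) * m%:R / T.
Proof.
have Tp := T_pos; have mp := m_pos.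
have hM := valP y.
rewrite /out_prob (bigID (fun i : 'I_n => (js <= i)%N)) /=.
rewrite (eq_bigr (fun i => v (val y) * (i \in val y)%:R)); last first.
  move=> i hi; rewrite /lemma2_channel /= hi.
  case: (i \in val y); rewrite ?mulr0 // mulr1; field; rewrite gt_eqF //.
rewrite -mulr_sumr cnt //.
rewrite (eq_bigr (fun i => p i * (v (val y) * m%:R / T))); last first.
  by move=> i hi; rewrite /lemma2_channel /= (negbTE hi).
rewrite -mulr_suml.
have -> : \sum_(i : 'I_n | ~~ (js <= i)%N) p i = 1 - T.
  by rewrite -head_sum; apply: eq_bigl => i; rewrite ltnNge.
field; rewrite gt_eqF //.
Qed.

Lemma postE y : 0 < out_prob p W y -> posterior p W y = map (gpost (val y)) (enum 'I_n).
Proof.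
have Tp := T_pos; have mp := m_pos.
rewrite outE => hpos.
have v0 : v (val y) != 0.
  by apply/eqP => h; move: hpos; rewrite h !mul0r ltxx.
rewrite /posterior; apply: eq_map => i; rewrite outE /lemma2_channel /gpost /=.
case: ifP => hi; last by field; rewrite v0 !gt_eqF.
case: ifP => _; last by rewrite mulr0 mul0r.
field; rewrite v0 !gt_eqF //.
Qed.


Lemma out_ge0 y : 0 <= out_prob p W y.
Proof. by apply: sumr_ge0 => i _; rewrite mulr_ge0 ?W_ge0 // ltW. Qed.

Lemma out_sum : \sum_(y | 0 < out_prob p W y) out_prob p W y = 1.
Proof.
rewrite -p_sum.
transitivity (\sum_y out_prob p W y).
  rewrite [RHS](bigID (fun y => 0 < out_prob p W y)) /= [X in _ = _ + X]big1 ?addr0 //.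
  move=> y hy; apply/eqP; rewrite eq_le out_ge0 andbT; by rewrite leNgt.
rewrite /out_prob exchange_big /=; apply: eq_bigr => i _.
by rewrite -mulr_sumr W_sum mulr1.
Qed.

Lemma entropy_eq (eta : R -> R) (F : seq R -> R) : gen_entropy eta F ->
  cond_entropy eta F p W = entropy eta F (pivec k p).
Proof.
move=> [_ Fperm Fexp _]; rewrite /cond_entropy /entropy; congr eta.
have pv := probvec_pivec.
have pv2 : probvec (pivec k p ++ nseq (n - k) 0).
  case: pv => pv1 pv2; split.
    by move=> x; rewrite mem_cat => /orP[/pv1 //|]; rewrite mem_nseq => /andP[_ /eqP ->].
  have z : \sum_(x <- nseq (n - k) (0:R)) x = 0.
    by rewrite big1_seq // => x /andP[_]; rewrite mem_nseq => /andP[_ /eqP ->].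
  by rewrite big_cat /= z pv2 addr0.
transitivity (\sum_(y | 0 < out_prob p W y) out_prob p W y * F (pivec k p)).
  apply: eq_bigr => y hy; rewrite postE //; congr (_ * _).
  rewrite -(Fexp _ (n - k)%N pv); symmetry; apply: Fperm pv2 _.
  rewrite perm_sym; apply: perm_post; exact: valP.
by rewrite -mulr_suml out_sum mul1r.
Qed.

End V.

Lemma main_sec :
  (exists v : {set 'I_n} -> R, lemma2_solution k p v) /\
  (forall v : {set 'I_n} -> R, lemma2_solution k p v ->
     [/\ is_channel (lemma2_channel k p v),
         feasible k (lemma2_channel k p v) &
         forall (eta : R -> R) (F : seq R -> R), gen_entropy eta F ->
           cond_entropy eta F p (lemma2_channel k p v) = entropy eta F (pivec k p)]).
Proof.
split; first exact: exists_sol.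
move=> v hv; split.
- by split; [exact: W_ge0 | exact: W_sum].
- exact: W_feasible.
- by move=> eta F; apply: entropy_eq.
Qed.

End Main.

Theorem lemma2 (R : realType) (n k : nat) (p : 'I_n -> R)
    (p_pos : forall i, 0 < p i)
    (p_sum : \sum_(i < n) p i = 1)
    (p_noninc : forall i j : 'I_n, (i <= j)%N -> p j <= p i)
    (k_pos : (0 < k)%N) (k_lt_n : (k < n)%N) :
  (exists v : {set 'I_n} -> R, lemma2_solution k p v) /\
  (forall v : {set 'I_n} -> R, lemma2_solution k p v ->
     [/\ is_channel (lemma2_channel k p v),
         feasible k (lemma2_channel k p v) &
         forall (eta : R -> R) (F : seq R -> R), gen_entropy eta F ->
           cond_entropy eta F p (lemma2_channel k p v) = entropy eta F (pivec k p)]).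
Proof. by apply: main_sec. Qed.
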